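(* Let $q\ge2$ and let $D$ be a directed graph on $n$ vertices with an induced acyclic subgraph on $I$ vertices. If $D$ is $q$-solvable, then $n \ge I + q\left(1-\frac1q\right)^{I}$.
   Context: A directed graph $D=(V,E)$ has arcs $E \subseteq \{(u,v)\in V^2 : u \neq v\}$ (bidirectional pairs allowed). An induced subgraph is acyclic if it contains no directed cycle. $N^-(v)=\{u:(u,v)\in E\}$. For $q\ge2$ let $[q]=\{0,\dots,q-1\}$. A $D$-function over $[q]$ is a map $f=(f_v)_{v\in V}:[q]^V\to[q]^V$ with each $f_v(x)$ depending only on $(x_u)_{u\in N^-(v)}$. $D$ is $q$-solvable if some $D$-function $f$ over $[q]$ has the property that for every $x\in[q]^V$ there is $v$ with $f_v(x)=x_v$. *)

(* Defs.v *)
From HB Require Import structures.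
From mathcomp Require Import all_boot all_order all_algebra.
Set Implicit Arguments. Unset Strict Implicit. Unset Printing Implicit Defensive.

(* A directed graph D = (V, E): V a finite type, E : rel V the arc relation
   ((u,v) is an arc iff E u v). Loops are excluded by a separate hypothesis. *)

Definition has_dicycle_in (V : finType) (E : rel V) (S : {set V}) : Prop :=
  exists c : seq V, [/\ c != [::], uniq c, all (fun v => v \in S) c & cycle E c].

Definition induced_acyclic (V : finType) (E : rel V) (S : {set V}) : Prop :=
  ~ has_dicycle_in E S.

Definition is_D_function (V : finType) (E : rel V) (q : nat)
  (f : (V -> 'I_q) -> V -> 'I_q) : Prop :=
  forall (v : V) (x y : V -> 'I_q),
    (forall u, E u v -> x u = y u) -> f x v = f y v.

Definition q_solvable (V : finType) (E : rel V) (q : nat) : Prop :=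
  exists f : (V -> 'I_q) -> V -> 'I_q,
    is_D_function E f /\ forall x : V -> 'I_q, exists v : V, f x v = x v.

(* Main.v *)
Require Import Defs.
From HB Require Import structures.
From mathcomp Require Import all_boot all_order all_algebra.
From mathcomp Require Import zify ring.
Import Order.TTheory GRing.Theory Num.Theory.
Set Implicit Arguments. Unset Strict Implicit. Unset Printing Implicit Defensive.

Lemma count_fix (q : nat) (V : finType) (s : V) (P : {set {ffun V -> 'I_q}})
  (g : {ffun V -> 'I_q} -> 'I_q) :
  (forall x y : {ffun V -> 'I_q}, (forall u, u != s -> x u = y u) -> (x \in P) = (y \in P)) ->
  (forall x y : {ffun V -> 'I_q}, (forall u, u != s -> x u = y u) -> g x = g y) ->
  #|[set x in P | g x == x s]| * q = #|P|.
Proof.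
move=> HP Hg.
pose Q := [set x in P | g x == x s].
pose upd (yk : {ffun V -> 'I_q} * 'I_q) : {ffun V -> 'I_q} :=
  [ffun u => if u == s then yk.2 else yk.1 u].
have updE y k u : u != s -> upd (y,k) u = y u.
  by move=> /negbTE hu; rewrite ffunE /= hu.
have upds y k : upd (y,k) s = k by rewrite ffunE eqxx.
have -> : #|Q| * q = #|upd @: setX Q [set: 'I_q]|.
  rewrite card_in_imset; first by rewrite cardsX cardsT card_ord.
  move=> [y k] [y' k'] /setXP[Hy _] /setXP[Hy' _] /= E.
  have kk : k = k' by rewrite -(upds y k) -(upds y' k') E.
  subst k'; congr pair; apply/ffunP => u.
  have off w : w != s -> y w = y' w.
    by move=> hw; rewrite -(updE y k w hw) -(updE y' k w hw) E.
  case: (eqVneq u s) => [->|hu]; last exact: off.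
  move: Hy Hy'; rewrite !inE => /andP[_ /eqP <-] /andP[_ /eqP <-].
  exact: Hg.
suff -> : upd @: setX Q [set: 'I_q] = P by [].
apply/setP => x; apply/imsetP/idP.
- move=> [[y k] /setXP[Hy _] ->]; move: Hy; rewrite inE => /andP[Hy _].
  by rewrite (HP _ y) // => u hu; rewrite updE.
- move=> Hx; exists (upd (x, g x), x s).
    rewrite inE /= !inE andbT (HP _ x) ?Hx /=; last by move=> u hu; rewrite updE.
    by rewrite upds (Hg _ x) // => u hu; rewrite updE.
  apply/ffunP => u; case: (eqVneq u s) => [->|hu]; first by rewrite upds.
  by rewrite !updE.
Qed.

Lemma arith (a b c q : nat) : a * q = c -> a + b = c -> b * q = c * (q - 1).
Proof.
case: q => [|q]; first by rewrite !muln0.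
move=> H1 H2; rewrite subn1 /=; rewrite mulnS in H1; nia.
Qed.

Lemma count_nfix (q : nat) (V : finType) (s : V) (P : {set {ffun V -> 'I_q}})
  (g : {ffun V -> 'I_q} -> 'I_q) :
  (forall x y : {ffun V -> 'I_q}, (forall u, u != s -> x u = y u) -> (x \in P) = (y \in P)) ->
  (forall x y : {ffun V -> 'I_q}, (forall u, u != s -> x u = y u) -> g x = g y) ->
  #|[set x in P | g x != x s]| * q = #|P| * (q - 1).
Proof.
move=> HP Hg; have H1 := count_fix HP Hg.
have H2 := cardsID [set x | g x == x s] P.
have E4 : P :&: [set x | g x == x s] = [set x in P | g x == x s].
  by apply/setP => x; rewrite !inE.
have E3 : P :\: [set x | g x == x s] = [set x in P | g x != x s].
  by apply/setP => x; rewrite !inE andbC.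
rewrite E3 E4 in H2.
exact: arith H1 H2.
Qed.

Lemma sink (V : finType) (E : rel V) (S : {set V}) :
  S != set0 -> induced_acyclic E S ->
  exists2 s, s \in S & forall w, w \in S -> ~~ E s w.
Proof.
move=> /set0Pn[v0 Hv0] Hac.
case: (boolP [exists s in S, [forall w in S, ~~ E s w]]).
  by move=> /exists_inP[s Hs /forall_inP H]; exists s.
move=> Hn; exfalso; apply: Hac.
have Hall s : s \in S -> exists w, (w \in S) && E s w.
  move=> Hs; move: Hn; rewrite negb_exists_in => /forall_inP/(_ s Hs).
  rewrite negb_forall_in => /exists_inP[w hw he].
  by exists w; rewrite hw; rewrite negbK in he.
pose h v := odflt v [pick w | (w \in S) && E v w].
have hS v : v \in S -> (h v \in S) && E v (h v).
  move=> hv; rewrite /h; case: pickP => [w //|H0].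
  by case: (Hall v hv) => w; rewrite H0.
have itS n : iter n h v0 \in S.
  by elim: n => //= n IH; case/andP: (hS _ IH).
have [i ilt Ei] : exists2 i, i < order h v0 & iter (order h v0) h v0 = iter i h v0.
  by have /trajectP[i ilt Ei] := looping_order h v0; exists i.
pose y := iter i h v0.
have cyc : fcycle h (orbit h y).
  apply: (iffRL (@orbitPcycle _ h y 0 3)); rewrite /=; exists (order h v0 - i - 1).
  rewrite /y -iterD -iterS; have -> : (order h v0 - i - 1 + i).+1 = order h v0 by lia.
  by rewrite -Ei.
have orbS : all (fun v => v \in S) (orbit h y).
  by apply/allP => z /trajectP [j _ ->]; rewrite /y -iterD; exact: itS.
have v0o : y \in orbit h y by rewrite -fconnect_orbit connect0.
exists (orbit h y); split.
- by apply/eqP => E0; rewrite E0 in v0o.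
- exact: orbit_uniq.
- exact: orbS.
- apply: (@sub_in_cycle _ (mem S) (frel h)).
  + move=> a b ha _ /eqP <-. exact: (proj2 (andP (hS a ha))).
  + exact: orbS.
  + exact: cyc.
Qed.

Lemma count_A (q : nat) (V : finType) (E : rel V) (F : {ffun V -> 'I_q} -> V -> 'I_q) :
  irreflexive E ->
  (forall v (x y : {ffun V -> 'I_q}), (forall u, E u v -> x u = y u) -> F x v = F y v) ->
  forall k (S : {set V}), #|S| = k -> induced_acyclic E S ->
  #|[set x | [forall v in S, F x v != x v]]| * q ^ k = q ^ #|V| * (q - 1) ^ k.
Proof.
move=> Eirr HF; elim=> [|k IH] S HS Hac.
  have -> : S = set0 by apply: cards0_eq.
  have -> : [set x | [forall v in set0, F x v != x v]] = setT.
    by apply/setP => x; rewrite !inE; apply/forall_inP => v; rewrite inE.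
  by rewrite cardsT card_ffun card_ord !expn0 !muln1.
have nz : S != set0 by rewrite -card_gt0 HS.
case: (sink nz Hac) => s Hs Hsink.
pose S' := S :\ s.
have HS' : #|S'| = k by move: HS; rewrite (cardsD1 s) Hs add1n => -[].
have Hac' : induced_acyclic E S'.
  move=> [c [c0 cu cS cc]]; apply: Hac; exists c; split => //.
  by apply/allP => v /(allP cS); rewrite inE => /andP[_ ->].
have IH' := IH S' HS' Hac'.
pose A' := [set x | [forall v in S', F x v != x v]].
have -> : [set x | [forall v in S, F x v != x v]] = [set x in A' | F x s != x s].
  apply/setP => x; rewrite !inE; apply/forall_inP/andP.
    move=> H; split; last exact: H.
    by apply/forall_inP => v; rewrite inE => /andP[_ vS]; apply: H.
  move=> [/forall_inP H Hs'] v vS; case: (eqVneq v s) => [->//|vs].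
  by apply: H; rewrite in_setD1 vs vS.
have HP : forall x y : {ffun V -> 'I_q}, (forall u, u != s -> x u = y u) ->
    (x \in A') = (y \in A').
  move=> x y Hxy; rewrite !inE; apply: eq_forallb_in => v; rewrite inE => /andP[vs vS].
  have vs' : v != s by move: vs; rewrite in_set1.
  rewrite (Hxy v vs') (HF v x y) // => u Euv; apply: Hxy; apply/eqP => us.
  by move: (Hsink v vS); rewrite -us Euv.
have Hg : forall x y : {ffun V -> 'I_q}, (forall u, u != s -> x u = y u) ->
    F x s = F y s.
  move=> x y Hxy; apply: HF => u Eus; apply: Hxy; apply/eqP => us.
  by move: Eus; rewrite us Eirr.
have H1 := count_nfix HP Hg.
rewrite expnS mulnA H1 -mulnA (mulnC (q - 1)) mulnA IH' -mulnA.
by rewrite (mulnC _ (q - 1)) expnS.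
Qed.

Lemma card_bigcup_le (T I : finType) (D : {pred I}) (B : I -> {set T}) :
  #|\bigcup_(i in D) B i| <= \sum_(i in D) #|B i|.
Proof.
elim/big_rec2: _ => [|i a b _ Hab]; first by rewrite cards0.
by rewrite (leq_trans (leq_card_setU _ _).1) // leq_add2l.
Qed.

Lemma rat_step (q I m : nat) : (2 <= q)%N -> (q * (q - 1) ^ I <= m * q ^ I)%N ->
  (q%:R * (1 - q%:R^-1) ^+ I <= (m%:R : rat))%R.
Proof.
move=> q2 H.
have q0 : (q%:R : rat) != 0%R by rewrite pnatr_eq0; lia.
have -> : (1 - q%:R^-1 : rat)%R = ((q - 1)%:R / q%:R)%R.
  by rewrite natrB; [field | lia].
rewrite expr_div_n mulrA ler_pdivrMr; last by rewrite exprn_gt0 // ltr0n; lia.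
by rewrite -!natrX -!natrM ler_nat.
Qed.

Theorem corollary14 (q : nat) (V : finType) (E : rel V) (I : nat) :
  (2 <= q)%N ->
  irreflexive E ->
  (exists S : {set V}, #|S| = I /\ induced_acyclic E S) ->
  q_solvable E q ->
  (I%:R + q%:R * (1 - q%:R^-1) ^+ I <= (#|V|%:R : rat))%R.
Proof.
move=> q2 Eirr [S [HS Hac]] [f [Hf Hsol]].
pose F (x : {ffun V -> 'I_q}) v := f (fun u => x u) v.
have HF : forall v (x y : {ffun V -> 'I_q}), (forall u, E u v -> x u = y u) -> F x v = F y v.
  by move=> v x y H; exact: Hf.
have Hcnt := count_A Eirr HF HS Hac.
pose A := [set x | [forall v in S, F x v != x v]].
pose B v := [set x : {ffun V -> 'I_q} | F x v == x v].
have HB v : #|B v| * q = q ^ #|V|.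
  have := @count_fix q V v setT (fun x => F x v) (fun x y _ => etrans (in_setT x) (esym (in_setT y))).
  have -> : [set x in [set: {ffun V -> 'I_q}] | F x v == x v] = B v.
    by apply/setP => x; rewrite !inE.
  move=> ->; last by move=> x y Hxy; apply: HF => u Euv; apply: Hxy; apply/eqP => uv;
    move: Euv; rewrite uv Eirr.
  by rewrite cardsT card_ffun card_ord.
have sub : A \subset \bigcup_(v in ~: S) B v.
  apply/subsetP => x; rewrite inE => /forall_inP H.
  have [v Hv] := Hsol (fun u => x u).
  apply/bigcupP; exists v; last by rewrite inE; apply/eqP.
  rewrite inE; apply/negP => vS; have := H v vS; by rewrite /F Hv eqxx.
have sumB : (\sum_(v in ~: S) #|B v|) * q = #|~: S| * q ^ #|V|.
  by rewrite big_distrl /= (eq_bigr _ (fun v _ => HB v)) sum_nat_const.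
have le1 : #|A| * q <= #|~: S| * q ^ #|V|.
  rewrite -sumB leq_mul2r; apply/orP; right.
  exact: leq_trans (subset_leq_card sub) (card_bigcup_le _ _).
have cS := cardsC S.
set m := #|~: S| in le1 cS.
have key : (q * (q - 1) ^ I <= m * q ^ I)%N.
  have qn : 0 < q ^ #|V| by rewrite expn_gt0; lia.
  rewrite -(leq_pmul2l qn) mulnCA -Hcnt mulnA (mulnC q) mulnA (mulnC (q ^ #|V|) m).
  by rewrite leq_mul2r le1 orbT.
have -> : #|V| = I + m by rewrite -cS HS.
by rewrite natrD lerD2l; apply: rat_step.
Qed.
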